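(* Let $\Lambda:\mathbb{R}\to[0,1]$ be decreasing. The map $\mathrm{ES}_\Lambda:L^1\to\overline{\mathbb{R}}$ satisfies $$-\infty<\mathbb E[X]\le\mathrm{ES}_\Lambda(X)\le\mathrm{ES}_1(X),\quad X\in L^1.$$ In particular, for $X\in L^1$, $\mathrm{ES}_\Lambda(X)$ is finite if and only if $\mathrm{VaR}_1(X)<\infty$ or $\Lambda$ is not constantly $1$.
   Context: $(\Omega,\mathcal F,\mathbb P)$ is an atomless probability space, $L^0$ all random variables, $L^1$ integrable ones; $\overline{\mathbb{R}}=[-\infty,\infty]$; ''decreasing'' is weak; $\wedge=\min$. For $\alpha\in[0,1]$, $X\in L^0$: $\mathrm{VaR}_\alpha(X)=\inf\{x\in\mathbb{R}:\mathbb P(X\le x)\ge\alpha\}$ (so $\mathrm{VaR}_1(X)$ is the essential supremum, possibly $\infty$). For $X\in L^1$: $\mathrm{ES}_\alpha(X)=\frac{1}{1-\alpha}\int_\alpha^1\mathrm{VaR}_\beta(X)\,\mathrm d\beta$ for $\alpha\in[0,1)$ and $\mathrm{ES}_1(X)=\mathrm{VaR}_1(X)$; for decreasing $\Lambda$, $\mathrm{ES}_\Lambda(X)=\sup_{x\in\mathbb{R}}\left(\mathrm{ES}_{\Lambda(x)}(X)\wedge x\right)$, $X\in L^1$. *)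

(* Defs.v *)
From HB Require Import structures.
From mathcomp Require Import all_boot all_order all_algebra.
From mathcomp Require Import all_classical all_reals all_analysis.
Set Implicit Arguments. Unset Strict Implicit. Unset Printing Implicit Defensive.
Import Order.TTheory GRing.Theory Num.Theory.
Import numFieldNormedType.Exports.
Local Open Scope classical_set_scope.
Local Open Scope ring_scope.

Definition atomless (R : realType) (d : measure_display) (T : measurableType d)
  (P : probability T R) : Prop :=
  forall A : set T, measurable A -> (0 < P A)%E ->
    exists B : set T, [/\ measurable B, B `<=` A, (0 < P B)%E & (P B < P A)%E].

(* VaR_alpha(X) = inf { x in R : P(X <= x) >= alpha }, in the extended reals
   (inf of the empty set is +oo, inf of an unbounded-below set is -oo) *)
Definition VaR (R : realType) (d : measure_display) (T : measurableType d)
  (P : probability T R) (alpha : R) (X : T -> R) : \bar R :=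
  ereal_inf [set x%:E | x in [set x : R | (alpha%:E <= P [set w | (X w <= x)%R])%E]].

Definition ES (R : realType) (d : measure_display) (T : measurableType d)
  (P : probability T R) (alpha : R) (X : T -> R) : \bar R :=
  if alpha < 1 then
    (((1 - alpha)^-1)%:E *
      \int[lebesgue_measure]_(b in `[alpha, 1%R]) VaR P b X)%E
  else VaR P 1 X.

Definition ESL (R : realType) (d : measure_display) (T : measurableType d)
  (P : probability T R) (Lam : R -> R) (X : T -> R) : \bar R :=
  ereal_sup [set (Order.min (ES P (Lam x) X) x%:E)%E | x in [set: R]].

(* Main.v *)
Require Import Defs.
From HB Require Import structures.
From mathcomp Require Import all_boot all_order all_algebra.
From mathcomp Require Import all_classical all_reals all_analysis.
From mathcomp Require Import measurable_realfun.
From mathcomp Require Import lra.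
Set Implicit Arguments. Unset Strict Implicit. Unset Printing Implicit Defensive.
Import Order.TTheory GRing.Theory Num.Theory.
Import numFieldNormedType.Exports.
Local Open Scope classical_set_scope.
Local Open Scope ring_scope.
Lemma nd_emeas (R : realType) (f : R -> \bar R) :
  {homo f : x y / x <= y >-> (x <= y)%E} -> measurable_fun setT f.
Proof.
move=> fnd.
apply: (measurability _ (ErealGenCInfty.measurableE R)) => //.
move=> _ [_ [r ->] <-]; apply: measurableI => //.
apply: is_interval_measurable => s t /= hs ht u /andP[su ut].
move: hs ht; rewrite !in_itv /= !andbT => hs _.
exact: le_trans hs (fnd _ _ su).
Qed.

Lemma ni_emeas (R : realType) (f : R -> \bar R) :
  {homo f : x y / x <= y >-> (y <= x)%E} -> measurable_fun setT f.
Proof.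
move=> fni.
apply: (measurability _ (ErealGenCInfty.measurableE R)) => //.
move=> _ [_ [r ->] <-]; apply: measurableI => //.
apply: is_interval_measurable => s t /= hs ht u /andP[su ut].
move: hs ht; rewrite !in_itv /= !andbT => _ ht.
exact: le_trans ht (fni _ _ ut).
Qed.

Lemma mset_lt d (T : measurableType d) (R : realType) (g : T -> R) t :
  measurable_fun setT g -> measurable [set w | t < g w].
Proof.
move=> mg; have := mg measurableT _ (measurable_itv `]t, +oo[).
by rewrite setTI; congr measurable; apply/seteqP; split => w /=; rewrite in_itv/= andbT.
Qed.

Lemma mset_ge d (T : measurableType d) (R : realType) (g : T -> R) t :
  measurable_fun setT g -> measurable [set w | t <= g w].
Proof.
move=> mg; have := mg measurableT _ (measurable_itv `[t, +oo[).
by rewrite setTI; congr measurable; apply/seteqP; split => w /=; rewrite in_itv/= andbT.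
Qed.

Lemma mset_le d (T : measurableType d) (R : realType) (g : T -> R) t :
  measurable_fun setT g -> measurable [set w | g w <= t].
Proof.
move=> mg; have := mg measurableT _ (measurable_itv `]-oo, t]).
by rewrite setTI; congr measurable; apply/seteqP; split => w /=; rewrite in_itv/=.
Qed.
Lemma layer_pos (R : realType) d (T : measurableType d) (Q : probability T R)
  (Y : T -> R) : measurable_fun setT Y -> (forall w, 0 <= Y w) ->
  (\int[Q]_w (Y w)%:E = \int[lebesgue_measure]_(t in `[0%R, +oo[) Q [set w | (t < Y w)%R])%E.
Proof.
move=> mY Y0.
pose YR : {RV Q >-> R} := mfun_Sub (mem_set mY).
have := @ge0_expectation_ccdf _ _ _ Q YR Y0.
rewrite expectation_def => ->.
apply: eq_integral => t _; rewrite /ccdf /distribution /pushforward.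
by congr (Q _); apply/seteqP; split => w /=; rewrite in_itv/= andbT.
Qed.

Lemma layer_neg (R : realType) d (T : measurableType d) (Q : probability T R)
  (Y : T -> R) : measurable_fun setT Y -> (forall w, 0 <= Y w) ->
  (\int[Q]_w (Y w)%:E = \int[lebesgue_measure]_(r in `]-oo, 0%R[) Q [set w | (- r <= Y w)%R])%E.
Proof.
move=> mY Y0.
have mNY : measurable_fun setT (fun w => - Y w) by exact: measurable_funN.
pose YR : {RV Q >-> R} := mfun_Sub (mem_set mNY).
have NY0 : forall w, YR w <= 0 by move=> w; rewrite /= oppr_le0.
have := @le0_expectation_cdf _ _ _ Q YR NY0.
rewrite expectation_def /=.
under eq_integral do rewrite EFinN.
rewrite integral_ge0N; last by move=> w _; rewrite lee_fin.
move/oppe_inj => ->.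
apply: eq_integral => t _; rewrite /cdf /distribution /pushforward.
by congr (Q _); apply/seteqP; split => w /=; rewrite in_itv/= lerNl.
Qed.
Section unif.
Context (R : realType) (a : R) (a0 : 0 <= a) (ab : a < 1).
Let U := uniform_prob ab.
Let mu := @lebesgue_measure R.

Lemma U_E (A : set R) : measurable A ->
  U A = (((1 - a)^-1)%:E * mu (A `&` `[a, 1%R]))%E.
Proof.
move=> mA; rewrite /U /uniform_prob integral_uniform_pdf.
rewrite -integral_cst; last exact: measurableI.
apply: eq_integral => x; rewrite inE /= in_itv /= => -[_ h].
by rewrite /uniform_pdf h.
Qed.

Let c_ge1 : 1 <= (1 - a)^-1.
Proof. by rewrite invf_ge1 ?subr_gt0// lerBlDr lerDl. Qed.
Let c_gt0 : 0 < (1 - a)^-1.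
Proof. by rewrite invr_gt0 subr_gt0. Qed.
Let c_1a : (1 - a)^-1 * (1 - a) = 1.
Proof. by rewrite mulVf// subr_eq0 gt_eqF. Qed.

Lemma U1 m : 0 <= m <= 1 -> ((1 - m)%:E <= U `]m, 1%R[)%E.
Proof.
move=> /andP[m0 m1].
pose M := Num.max m a.
have sub : `]M, 1%R[ `<=` `]m, 1%R[.
  move=> x /=; rewrite !in_itv /= => /andP[Mx ->]; rewrite andbT.
  by apply: le_lt_trans Mx; rewrite le_max lexx.
apply: (@le_trans _ _ (U `]M, 1%R[)); last first.
  by apply: le_measure => //; rewrite inE.
rewrite U_E // setIidl; last first.
  move=> x /=; rewrite !in_itv /= => /andP[Mx x1]; rewrite (ltW x1) andbT.
  by apply: ltW; apply: le_lt_trans Mx; rewrite le_max lexx orbT.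
rewrite /mu lebesgue_measure_itv /= lte_fin.
have [M1|M1] := ltP M 1.
  rewrite -EFinD -EFinM lee_fin.
  have [ma|ma] := leP a m.
    have -> : M = m by rewrite /M; apply/max_idPl.
    have : 0 <= ((1 - a)^-1 - 1) * (1 - m) by rewrite mulr_ge0 ?subr_ge0.
    nra.
  have -> : M = a by rewrite /M; apply/max_idPr; exact: ltW.
  by rewrite c_1a; lra.
have -> : m = 1.
  move: M1; rewrite le_max; case/orP => h; first by apply/le_anti; rewrite m1 h.
  by exfalso; move: h; rewrite leNgt ab.
by rewrite subrr mule0.
Qed.

Lemma U2 m : m <= 1 -> (U `]m, +oo[ <= ((1 - a)^-1 * (1 - m))%:E)%E.
Proof.
move=> m1; rewrite U_E //.
apply: (@le_trans _ _ (((1 - a)^-1)%:E * mu `]m, 1%R])%E).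
  apply: lee_wpmul2l; first by rewrite lee_fin ltW.
  apply: le_measure; rewrite ?inE//; first exact: measurableI.
  move=> x [] /=; rewrite !in_itv /= andbT => -> /andP[_ ->] //.
rewrite /mu lebesgue_measure_itv /= lte_fin.
case: ifP => h; first by rewrite -EFinD -EFinM.
rewrite mule0 lee_fin; apply: mulr_ge0; [exact: ltW| lra].
Qed.

Lemma U3 m : 0 <= m <= 1 -> (U `]-oo, m] <= m%:E)%E.
Proof.
move=> /andP[m0 m1]; rewrite U_E //.
apply: (@le_trans _ _ (((1 - a)^-1)%:E * mu `[a, m])%E).
  apply: lee_wpmul2l; first by rewrite lee_fin ltW.
  apply: le_measure; rewrite ?inE//; first exact: measurableI.
  move=> x [] /=; rewrite !in_itv /= => -> /andP[-> _] //.
rewrite /mu lebesgue_measure_itv /= lte_fin.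
case: ifP => h; last by rewrite mule0 lee_fin.
rewrite -EFinD -EFinM lee_fin.
have : 0 <= (1 - a)^-1 * a * (1 - m) by rewrite mulr_ge0 ?mulr_ge0 ?subr_ge0// ltW.
have := c_1a; nra.
Qed.

End unif.

Lemma fine_neq0 (R : realType) (x : \bar R) : fine x != 0 -> x = (fine x)%:E.
Proof. by case: x => //=; rewrite eqxx. Qed.

Section quant.
Context (R : realType) (d : measure_display) (T : measurableType d)
  (P : probability T R) (X : T -> R).
Hypothesis iX : P.-integrable setT (EFin \o X).

Let mX : measurable_fun setT X.
Proof. by have := measurable_int _ iX => /measurable_EFinP. Qed.

Let XR : {RV P >-> R} := mfun_Sub (mem_set mX).

Let F s := P [set w | X w <= s].

Let FE s : F s = cdf XR s.
Proof. by rewrite /F /cdf /distribution /pushforward; congr (P _). Qed.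

Let F_nd s t : s <= t -> (F s <= F t)%E.
Proof. by move=> st; rewrite !FE; apply: cdf_nondecreasing. Qed.

Let Fr s := fine (F s).
Let FrE s : (Fr s)%:E = F s.
Proof. by rewrite /Fr fineK// fin_num_measure//; exact: mset_le. Qed.
Let Fr_ge0 s : 0 <= Fr s.
Proof. by rewrite -lee_fin FrE. Qed.
Let Fr_le1 s : Fr s <= 1.
Proof. by rewrite -lee_fin FrE; apply: probability_le1; exact: mset_le. Qed.
Lemma VaR_le b s : (VaR P b X <= s%:E)%E <-> (b%:E <= F s)%E.
Proof.
split; last first.
  by move=> h; apply: ereal_inf_lbound; exists s.
move=> hq; apply/negP => /negP; rewrite -ltNge => hb.
have [r sr Frb] : exists2 r, s < r & (F r < b%:E)%E.
  apply: contrapT => hn.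
  have : (b%:E <= F s)%E.
    rewrite FE; move: (@cdf_right_continuous _ _ _ P XR s); apply: cvge_ge.
    near=> r; rewrite -FE.
    have sr : s < r by near: r; exact: nbhs_right_gt.
    by rewrite leNgt; apply/negP => Frb; apply: hn; exists r.
  by rewrite leNgt hb.
have : (r%:E <= VaR P b X)%E.
  apply: le_ereal_inf_tmp => _ [x /= bFx <-]; rewrite lee_fin.
  rewrite leNgt; apply/negP => xr.
  have := le_trans bFx (F_nd (ltW xr)).
  by rewrite leNgt Frb.
move=> /le_trans /(_ hq); rewrite lee_fin leNgt sr.
done.
Unshelve. all: by end_near.
Qed.


Lemma VaR_nd b c : b <= c -> (VaR P b X <= VaR P c X)%E.
Proof.
move=> bc; apply: ereal_inf_le_tmp => _ [x /= cx <-]; exists x => //=.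
exact: le_trans cx.
Qed.

Lemma VaR_lty b : b < 1 -> (VaR P b X < +oo)%E.
Proof.
move=> b1.
have [x bx] : exists x, (b%:E <= F x)%E.
  apply: contrapT => hn.
  have : (1 <= b%:E)%E.
    move: (@cvg_cdfy1 _ _ _ P XR); apply: cvge_le.
    near=> x; rewrite -FE leNgt; apply/negP => h; apply: hn; exists x.
    exact: ltW.
  by rewrite lee_fin leNgt b1.
by apply: (le_lt_trans (proj2 (VaR_le b x) bx)); rewrite ltry.
Unshelve. all: by end_near.
Qed.

Lemma VaR_gtNy b : 0 < b -> (-oo < VaR P b X)%E.
Proof.
move=> b0.
have [x bx] : exists x, (F x < b%:E)%E.
  apply: contrapT => hn.
  have : (b%:E <= 0)%E.
    move: (@cvg_cdfNy0 _ _ _ P XR); apply: cvge_ge.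
    near=> x; rewrite -FE leNgt; apply/negP => h; apply: hn; exists x.
    exact: h.
  by rewrite lee_fin leNgt b0.
apply: (@lt_trans _ _ x%:E); first by rewrite ltNyr.
rewrite ltNge; apply/negP => /VaR_le h.
by move: (le_lt_trans h bx); rewrite ltxx.
Unshelve. all: by end_near.
Qed.

Lemma VaR_fin b : 0 < b < 1 -> VaR P b X \is a fin_num.
Proof.
by move=> /andP[b0 b1]; rewrite fin_numE -ltey -ltNye VaR_lty// VaR_gtNy.
Qed.

Lemma measurable_VaR : measurable_fun [set: R] (fun b : R => (VaR P b X : \bar R)).
Proof.
apply: (measurability _ (ErealGenCInfty.measurableE R)) => //.
move=> _ [_ [r ->] <-]; apply: measurableI => //.
apply: is_interval_measurable => s t /= hs ht u /andP[su ut].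
move: hs ht; rewrite !in_itv /= !andbT => hs _.
exact: le_trans hs (VaR_nd su).
Qed.


Let qr b := fine (VaR P b X).
Let mqr : measurable_fun setT qr.
Proof.
apply: measurableT_comp; last exact: measurable_VaR.
exact: fine_measurable.
Qed.
Let Y1 := (qr^\+)%R.
Let Y2 := (qr^\-)%R.
Let mY1 : measurable_fun setT Y1. Proof. exact: measurable_funrpos. Qed.
Let mY2 : measurable_fun setT Y2. Proof. exact: measurable_funrneg. Qed.
Let Y1_ge0 b : 0 <= Y1 b. Proof. by rewrite /Y1 /funrpos le_max lexx orbT. Qed.
Let Y2_ge0 b : 0 <= Y2 b. Proof. by rewrite /Y2 /funrneg le_max lexx orbT. Qed.

Let Y1a t b : 0 <= t -> Fr t < b < 1 -> t < Y1 b.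
Proof.
move=> t0 /andP[tb b1].
have b0 : 0 < b by exact: le_lt_trans (Fr_ge0 t) tb.
have qf := VaR_fin (b:=b); rewrite b0 b1 in qf; have := qf isT => {}qf.
rewrite /Y1 /funrpos lt_max; apply/orP; left.
rewrite /qr ltNge; apply/negP => h.
have : (VaR P b X <= t%:E)%E by rewrite -(fineK qf) lee_fin.
move/VaR_le; rewrite -FrE lee_fin => hb.
by move: (le_lt_trans hb tb); rewrite ltxx.
Qed.

Let Y1b t b : 0 <= t -> t < Y1 b -> Fr t < b.
Proof.
move=> t0; rewrite /Y1 /funrpos lt_max (ltNge t 0) t0 orbF => tq.
have qE : VaR P b X = (qr b)%:E.
  by apply: fine_neq0; rewrite gt_eqF//; exact: le_lt_trans tq.
rewrite ltNge; apply/negP => hb.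
have : (VaR P b X <= t%:E)%E by apply/VaR_le; rewrite -FrE lee_fin.
by rewrite qE lee_fin leNgt tq.
Qed.

Let Y2a r b : r < 0 -> - r <= Y2 b -> b <= Fr r.
Proof.
move=> r0; rewrite /Y2 /funrneg le_max (leNgt (- r) 0) oppr_gt0 r0 orbF.
rewrite lerN2 => qr_r.
have qE : VaR P b X = (qr b)%:E.
  by apply: fine_neq0; rewrite lt_eqF//; exact: le_lt_trans qr_r r0.
by rewrite -lee_fin FrE; apply/VaR_le; rewrite qE lee_fin.
Qed.

Let mu := @lebesgue_measure R.

Let itv_oo (f : R -> \bar R) (a : R) : measurable_fun setT f ->
  (\int[mu]_(b in `[a, 1%R]) f b = \int[mu]_(b in `]a, 1%R[) f b)%E.
Proof.
move=> mf.
rewrite -(@integral_itv_bndo_bndc _ (BLeft a) 1); last exact: measurable_funTS.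
rewrite -(@integral_itv_obnd_cbnd _ a (BLeft 1)) //; exact: measurable_funTS.
Qed.

Let ES_decomp a : 0 <= a -> a < 1 ->
  ES P a X = (((1 - a)^-1)%:E *
    (\int[mu]_(b in `]a, 1%R[) (Y1 b)%:E - \int[mu]_(b in `]a, 1%R[) (Y2 b)%:E))%E.
Proof.
move=> a0 a1; rewrite /ES a1; congr (_ * _)%E.
rewrite itv_oo; last exact: measurable_VaR.
rewrite integralE; congr (_ - _)%E.
- apply: eq_integral => b; rewrite inE /= in_itv /= => /andP[ab b1].
  have qf : VaR P b X \is a fin_num.
    by apply: VaR_fin; rewrite b1 andbT; exact: le_lt_trans ab.
  by rewrite funeposE -(fineK qf) /Y1 /funrpos EFin_max.
- apply: eq_integral => b; rewrite inE /= in_itv /= => /andP[ab b1].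
  have qf : VaR P b X \is a fin_num.
    by apply: VaR_fin; rewrite b1 andbT; exact: le_lt_trans ab.
  by rewrite funenegE -(fineK qf) /Y2 /funrneg EFin_max.
Qed.

Let U_Y a (a1 : a < 1) (Y : R -> R) : measurable_fun setT Y -> (forall b, 0 <= Y b) ->
  (\int[uniform_prob a1]_b (Y b)%:E =
   ((1 - a)^-1)%:E * \int[mu]_(b in `]a, 1%R[) (Y b)%:E)%E.
Proof.
move=> mY Y0; rewrite integral_uniform.
- by rewrite itv_oo //; exact/measurable_EFinP.
- exact/measurable_EFinP.
- by move=> b; rewrite lee_fin.
Qed.

Let EXp := (\int[P]_w (X^\+%R w)%:E)%E.
Let EXn := (\int[P]_w (X^\-%R w)%:E)%E.

Let EX_split : (\int[P]_w (X w)%:E = EXp - EXn)%E.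
Proof.
rewrite integralE; congr (_ - _)%E; apply: eq_integral => w _.
  by rewrite funeposE /funrpos EFin_max.
by rewrite funenegE /funrneg EFin_max.
Qed.

Let EXp_fin : EXp \is a fin_num.
Proof. by apply: integrable_fin_num => //; exact: integrable_funrpos. Qed.

Let EXn_fin : EXn \is a fin_num.
Proof. by apply: integrable_fin_num => //; exact: integrable_funrneg. Qed.

Let mXp : measurable_fun setT (X^\+)%R. Proof. exact: measurable_funrpos. Qed.
Let mXn : measurable_fun setT (X^\-)%R. Proof. exact: measurable_funrneg. Qed.

Let EXpE : EXp = (\int[mu]_(t in `[0%R, +oo[) P [set w | (t < X w)%R])%E.
Proof.
rewrite /EXp layer_pos; last 2 first.
  exact: mXp.
  by move=> w; rewrite /funrpos le_max lexx orbT.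
apply: eq_integral => t; rewrite inE /= in_itv /= andbT => t0.
congr (P _); apply/seteqP; split => w /=; rewrite /funrpos lt_max.
  by case/orP => //; rewrite ltNge t0.
by move=> ->.
Qed.

Let EXnE : EXn = (\int[mu]_(r in `]-oo, 0%R[) F r)%E.
Proof.
rewrite /EXn layer_neg; last 2 first.
  exact: mXn.
  by move=> w; rewrite /funrneg le_max lexx orbT.
apply: eq_integral => r; rewrite inE /= in_itv /= => r0.
congr (P _); apply/seteqP; split => w /=; rewrite /funrneg le_max.
  by case/orP; [rewrite lerN2|rewrite oppr_le0 leNgt r0].
by move=> h; rewrite lerN2 h.
Qed.

Let PgtE t : P [set w | (t < X w)%R] = (1 - Fr t)%:E.
Proof.
rewrite (_ : [set w | (t < X w)%R] = ~` [set w | X w <= t]); last first.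
  by apply/seteqP; split => w /=; rewrite ltNge => /negP.
rewrite probability_setC; last exact: mset_le.
by rewrite -[P _]/(F t) -FrE.
Qed.

Let Pgt_ni : {homo (fun t => P [set w | (t < X w)%R]) : s t / s <= t >-> (t <= s)%E}.
Proof.
move=> s t st; apply: le_measure; rewrite ?inE; try exact: mset_lt.
by move=> w /=; exact: le_lt_trans.
Qed.

Let F_nd' : {homo F : s t / s <= t >-> (s <= t)%E}.
Proof. by move=> s t st; exact: F_nd. Qed.

Let L3 a (a0 : 0 <= a) (a1 : a < 1) :
  (\int[uniform_prob a1]_b (Y2 b)%:E <= EXn)%E.
Proof.
pose U := uniform_prob a1.
have mle2 r : measurable [set b | (- r <= Y2 b)%R] by exact: mset_ge.
have U2_nd : {homo (fun r => U [set b | (- r <= Y2 b)%R]) : s t / s <= t >-> (s <= t)%E}.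
  move=> s t st; apply: le_measure; rewrite ?inE; [exact: mle2|exact: mle2|].
  by move=> w /= h; apply: le_trans h; rewrite lerN2.
rewrite EXnE (@layer_neg _ _ _ U Y2 mY2 Y2_ge0).
apply: ge0_le_integral => //.
- by apply: measurable_funTS; exact: nd_emeas.
- by apply: measurable_funTS; exact: nd_emeas.
move=> r; rewrite /= in_itv /= => r0.
have h3 : (U `]-oo, Fr r]%classic <= (Fr r)%:E)%E.
  by apply: U3 => //; rewrite Fr_ge0 Fr_le1.
rewrite -FrE; apply: le_trans h3.
apply: le_measure; rewrite ?inE //; first exact: mle2.
move=> b /= h; rewrite in_itv /=; exact: Y2a h.
Qed.

Let ESE a (a0 : 0 <= a) (a1 : a < 1) :
  ES P a X = (\int[uniform_prob a1]_b (Y1 b)%:E - \int[uniform_prob a1]_b (Y2 b)%:E)%E.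
Proof.
have c0 : (0 < (1 - a)^-1)%R by rewrite invr_gt0 subr_gt0.
have EY1 := U_Y a1 mY1 Y1_ge0.
have EY2 := U_Y a1 mY2 Y2_ge0.
set A := (\int[mu]_(b in `]a, 1%R[) (Y1 b)%:E)%E.
set B := (\int[mu]_(b in `]a, 1%R[) (Y2 b)%:E)%E.
have B0 : (0 <= B)%E by apply: integral_ge0 => b _; rewrite lee_fin.
have Bfin : B \is a fin_num.
  rewrite ge0_fin_numE // ltNge leye_eq; apply/negP => /eqP hB.
  move: (L3 a0 a1); rewrite EY2 -/B hB gt0_muley ?lte_fin// leye_eq => /eqP hn.
  by move: EXn_fin; rewrite hn.
rewrite ES_decomp // EY1 EY2 -/A -/B muleBr //.
by apply: fin_num_adde_defl; rewrite fin_numN.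
Qed.

Lemma ES_main a (a0 : 0 <= a) (a1 : a < 1) :
  (\int[P]_w (X w)%:E <= ES P a X)%E /\
  (ES P a X <= ((1 - a)^-1)%:E * \int[P]_w (X^\+%R w)%:E)%E.
Proof.
pose U := uniform_prob a1.
have c0 : (0 < (1 - a)^-1)%R by rewrite invr_gt0 subr_gt0.
have mlt1 t : measurable [set b | (t < Y1 b)%R] by exact: mset_lt.
have U1_ni : {homo (fun t => U [set b | (t < Y1 b)%R]) : s t / s <= t >-> (t <= s)%E}.
  move=> s t st; apply: le_measure; rewrite ?inE; [exact: mlt1|exact: mlt1|].
  move=> w /= h; exact: (le_lt_trans st h).
have L1 : (EXp <= \int[U]_b (Y1 b)%:E)%E.
  rewrite EXpE (@layer_pos _ _ _ U Y1 mY1 Y1_ge0); apply: ge0_le_integral => //.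
  - by apply: measurable_funTS; exact: ni_emeas.
  - by apply: measurable_funTS; exact: ni_emeas.
  move=> t; rewrite /= in_itv /= andbT => t0.
  rewrite PgtE.
  have h1 : ((1 - Fr t)%:E <= U `]Fr t, 1%R[%classic)%E.
    by apply: U1 => //; rewrite Fr_ge0 Fr_le1.
  apply: le_trans h1 _.
  apply: le_measure; rewrite ?inE //; first exact: mlt1.
  move=> b /=; rewrite in_itv /= => h; exact: Y1a.
have L2 : (\int[U]_b (Y1 b)%:E <= ((1 - a)^-1)%:E * EXp)%E.
  rewrite EXpE (@layer_pos _ _ _ U Y1 mY1 Y1_ge0) -ge0_integralZl //; last 2 first.
  - by apply: measurable_funTS; exact: ni_emeas.
  - by rewrite lee_fin ltW.
  apply: ge0_le_integral => //.
  - by apply: measurable_funTS; exact: ni_emeas.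
  - apply: measurable_funTS; apply: ni_emeas => s t st.
    by apply: lee_wpmul2l; [rewrite lee_fin ltW|exact: Pgt_ni].
  move=> t; rewrite /= in_itv /= andbT => t0.
  rewrite PgtE -EFinM.
  have h2 : (U `]Fr t, +oo[%classic <= ((1 - a)^-1 * (1 - Fr t))%:E)%E.
    by apply: U2.
  apply: le_trans h2.
  apply: le_measure; rewrite ?inE //; first exact: mlt1.
  move=> b /= h; rewrite in_itv /= andbT; exact: Y1b h.
rewrite (ESE a0 a1); split.
  by rewrite EX_split; apply: leeB => //; exact: L3.
apply: (@le_trans _ _ (\int[U]_b (Y1 b)%:E - 0)%E).
  by apply: leeB => //; apply: integral_ge0 => b _; rewrite lee_fin.
by rewrite sube0.
Qed.

Let cst_int a (a1 : a < 1) (k : R) :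
  (((1 - a)^-1)%:E * \int[mu]_(b in `]a, 1%R[) (cst k%:E b))%E = k%:E.
Proof.
rewrite integral_cst //= /mu lebesgue_measure_itv /= lte_fin a1 -EFinD.
by rewrite -!EFinM mulrC -mulrA mulfV ?mulr1 // subr_eq0 gt_eqF.
Qed.

Lemma ES_le_VaR1 a : 0 <= a -> a <= 1 -> (ES P a X <= VaR P 1 X)%E.
Proof.
move=> a0; rewrite le_eqVlt => /orP[/eqP ->|a1].
  by rewrite /ES ltxx.
have [vy|vny] := eqVneq (VaR P 1 X) +oo%E; first by rewrite vy leey.
have vfin : VaR P 1 X \is a fin_num.
  by rewrite fin_numE vny andbT -ltNye; apply: VaR_gtNy; exact: ltr01.
set v := fine (VaR P 1 X).
have qv b : a < b < 1 -> qr b <= v.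
  move=> /andP[ab b1].
  have qf : VaR P b X \is a fin_num.
    by apply: VaR_fin; rewrite b1 andbT; exact: le_lt_trans ab.
  by rewrite -lee_fin /qr /v !fineK //; apply: VaR_nd; exact: ltW.
have c0 : (0 <= ((1 - a)^-1)%:E)%E by rewrite lee_fin invr_ge0 subr_ge0 ltW.
rewrite (ESE a0 a1).
have h1 : (\int[uniform_prob a1]_b (Y1 b)%:E <= (Num.max v 0)%:E)%E.
  rewrite (U_Y a1 mY1 Y1_ge0) -(cst_int a1 (Num.max v 0)).
  apply: lee_wpmul2l => //; apply: ge0_le_integral => //.
  - by move=> b _; rewrite lee_fin.
  - by apply: measurable_funTS; exact/measurable_EFinP.
  move=> b; rewrite /= in_itv /= => hb; rewrite lee_fin /Y1 /funrpos.
  by rewrite ge_max !le_max lexx qv // orbT.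
have h2 : ((Num.max (- v) 0)%:E <= \int[uniform_prob a1]_b (Y2 b)%:E)%E.
  rewrite (U_Y a1 mY2 Y2_ge0) -(cst_int a1 (Num.max (- v) 0)).
  apply: lee_wpmul2l => //; apply: ge0_le_integral => //.
  - by move=> b _; rewrite lee_fin le_max lexx orbT.
  - by apply: measurable_funTS; exact/measurable_EFinP.
  move=> b; rewrite /= in_itv /= => hb; rewrite lee_fin /Y2 /funrneg.
  by rewrite ge_max !le_max lexx lerN2 qv // orbT.
apply: le_trans (leeB h1 h2) _.
rewrite -EFinB -(fineK vfin) lee_fin -/v.
have := congr1 (fun f => f tt) (funrposBneg (fun _ : unit => v)).
rewrite /funrpos /funrneg /= => h.
by rewrite -[X in _ <= X]h.
Qed.

Lemma EXp_fin' : (\int[P]_w (X^\+%R w)%:E)%E \is a fin_num.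
Proof. exact: EXp_fin. Qed.

Lemma EXp_ge0 : (0 <= \int[P]_w (X^\+%R w)%:E)%E.
Proof. by apply: integral_ge0 => w _; rewrite lee_fin /funrpos le_max lexx orbT. Qed.

Lemma ES_ge a : 0 <= a <= 1 -> (\int[P]_w (X w)%:E <= ES P a X)%E.
Proof.
move=> /andP[a0]; rewrite le_eqVlt => /orP[/eqP ->|a1]; last first.
  by case: (ES_main a0 a1).
have h := ES_le_VaR1 (lexx 0) ler01.
rewrite /ES ltxx; apply: le_trans h.
by case: (ES_main (lexx 0) ltr01).
Qed.

Lemma VaR1_gtNy : (-oo < VaR P 1 X)%E.
Proof. exact: VaR_gtNy ltr01. Qed.

End quant.

Theorem proposition6 (R : realType) (d : measure_display) (T : measurableType d)
  (P : probability T R) (Lam : R -> R) (X : T -> R) :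
  atomless P ->
  (forall x, 0 <= Lam x <= 1) ->
  (forall x y, x <= y -> Lam y <= Lam x) ->
  P.-integrable setT (EFin \o X) ->
  ([/\ (-oo < \int[P]_w (X w)%:E)%E,
       (\int[P]_w (X w)%:E <= ESL P Lam X)%E &
       (ESL P Lam X <= ES P 1 X)%E]
   /\ (ESL P Lam X \is a fin_num <->
       ((VaR P 1 X < +oo)%E \/ exists x, Lam x != 1))).
Proof.
move=> _ Lam01 Lamni iX.
set E := (\int[P]_w (X w)%:E)%E.
have Efin : E \is a fin_num by exact: integrable_fin_num.
have ESge x : (E <= ES P (Lam x) X)%E by exact: ES_ge.
have ESleV x : (ES P (Lam x) X <= VaR P 1 X)%E.
  by have /andP[h0 h1] := Lam01 x; exact: ES_le_VaR1.
have ES1 : ES P 1 X = VaR P 1 X by rewrite /ES ltxx.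
have inS x : [set (Order.min (ES P (Lam x) X) x%:E)%E | x in [set: R]]
    (Order.min (ES P (Lam x) X) x%:E)%E by exists x.
have H1 : (E <= ESL P Lam X)%E.
  apply: le_trans (ereal_sup_ubound (inS (fine E))).
  by rewrite le_min ESge /= fineK.
have H2 : (ESL P Lam X <= ES P 1 X)%E.
  apply: ge_ereal_sup => _ [x _ <-]; rewrite ES1 ge_min; apply/orP; left.
  exact: ESleV.
split; first by split => //; have /fin_numPlt/andP[] := Efin.
split.
  move=> hfin; apply: contrapT => /not_orP[hV hL].
  have hV' : VaR P 1 X = +oo%E by apply/eqP; rewrite eq_le leey /= leNgt; exact/negP.
  have hL' x : Lam x = 1.
    by apply/eqP; apply: contrapT => h; apply: hL; exists x; exact/negP.
  set y := (fine (ESL P Lam X) + 1)%R.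
  have := ereal_sup_ubound (inS y).
  rewrite -/(ESL P Lam X) hL' ES1 hV' (@min_r _ _ +oo%E) ?leey //.
  move=> h; have : (y <= fine (ESL P Lam X))%R by rewrite -lee_fin fineK.
  by rewrite /y; lra.
move=> h.
have lo : (-oo < ESL P Lam X)%E.
  by apply: lt_le_trans H1; have /fin_numPlt/andP[] := Efin.
rewrite fin_numE -ltNye lo /= -ltey.
case: h => [hV|[x0 hx0]].
  by apply: le_lt_trans H2 _; rewrite ES1.
have l0 : (Lam x0 < 1)%R.
  by have /andP[_ h1] := Lam01 x0; rewrite lt_neqAle hx0 h1.
set c0 := ((1 - Lam x0)^-1)%R.
set EXp := (\int[P]_w (X^\+%R w)%:E)%E.
have EXpf : EXp \is a fin_num by exact: EXp_fin'.
have EXp0 : (0 <= EXp)%E by exact: EXp_ge0.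
apply: (@le_lt_trans _ _ (Order.max x0%:E (c0%:E * EXp))%E).
  apply: ge_ereal_sup => _ [x _ <-].
  have [xx0|x0x] := leP x x0.
    rewrite ge_min; apply/orP; right; rewrite le_max; apply/orP; left.
    by rewrite lee_fin.
  rewrite ge_min; apply/orP; left; rewrite le_max; apply/orP; right.
  have lx : (Lam x <= Lam x0)%R by apply: Lamni; exact: ltW.
  have lx1 : (Lam x < 1)%R by exact: le_lt_trans lx l0.
  have /andP[lx0 _] := Lam01 x.
  case: (ES_main iX lx0 lx1) => _ /le_trans; apply.
  apply: lee_wpmul2r => //; rewrite lee_fin /c0 lef_pV2 ?posrE ?subr_gt0 //.
  by rewrite lerD2l lerN2.
rewrite gt_max ltry /=; rewrite -(fineK EXpf) -EFinM ltry.
by [].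
Qed.
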